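(* Let $k\ge0$ be an integer. Define $$P^*(x)=(1+x)^4\big(1+(2k+4)x^2\big)^{2k+1},$$ let $A^*(x)$ be the polynomial of degree at most $2k+3$ obtained by truncating the power series of $(1+x)^2\big(1+(2k+4)x^2\big)^{(2k+1)/2}$ at degree $2k+3$, i.e. $(1+x)^2(1+(2k+4)x^2)^{(2k+1)/2}=A^*(x)+O(x^{2k+4})$ as $x\to0$, and let $Q^*=(A^* )^2$. Then $$P^*(x)-Q^*(x)=O(x^{2k+5})\quad\text{as }x\to0,$$ i.e. $x^{2k+5}$ divides $P^*-Q^*$. Equivalently, with $P(x)=(x+1)^4(x^2+2k+4)^{2k+1}$ and $A(x)=x^{2k+3}A^*(1/x)$, one has $\deg\big(P-A^2\big)\le 2k+1$.
   Context: For a polynomial $F$ of degree $d$, its reciprocal is $F^*(x)=x^dF(1/x)$. This gives the Davenport–Zannier pair (black vertices of degrees $4,2k+1,2k+1$, all white vertices of degree 2, total weight $4k+6$) for the weighted tree of series $J$. *)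

(* Defs.v *)
From HB Require Import structures.
From mathcomp Require Import all_boot all_order all_algebra.
Set Implicit Arguments. Unset Strict Implicit. Unset Printing Implicit Defensive.
Import Order.TTheory GRing.Theory Num.Theory.
Local Open Scope ring_scope.

Definition gbinom (a : rat) (j : nat) : rat :=
  (\prod_(i < j) (a - i%:R)) / (j`!)%:R.

(* Coefficient of x^n in the binomial power series (1 + c x^2)^a
   = sum_j gbinom a j * c^j * x^(2j). *)
Definition binser_sq_coef (c a : rat) (n : nat) : rat :=
  if odd n then 0 else gbinom a n./2 * c ^+ n./2.

Definition binser_sq_trunc (c a : rat) (N : nat) : {poly rat} :=
  \poly_(n < N) binser_sq_coef c a n.

Definition Pstar (k : nat) : {poly rat} :=
  ('X + 1) ^+ 4 * (1 + (2 * k + 4)%:R *: 'X ^+ 2) ^+ (2 * k + 1).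

Definition Astar (k : nat) : {poly rat} :=
  take_poly (2 * k + 4)
    (('X + 1) ^+ 2 *
       binser_sq_trunc (2 * k + 4)%:R ((2 * k + 1)%:R / 2) (2 * k + 4)).

Definition Qstar (k : nat) : {poly rat} := Astar k ^+ 2.

(* Main.v *)
Require Import Defs.
From mathcomp Require Import all_boot all_order all_algebra.
From mathcomp Require Import ring lra zify.
Import GRing.Theory Num.Theory.
Local Open Scope ring_scope.

Lemma dvdXn_coef (m : nat) (p : {poly rat}) :
  (forall i, (i < m)%N -> p`_i = 0) -> 'X^m %| p.
Proof.
move=> H; rewrite -(poly_take_drop m p).
have -> : take_poly m p = 0.
  apply/polyP => i; rewrite coef_take_poly coef0; case: ifP => // /H //.
by rewrite add0r dvdp_mull // dvdpp.
Qed.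

Lemma coef_dvdXn (m : nat) (p : {poly rat}) i :
  'X^m %| p -> (i < m)%N -> p`_i = 0.
Proof. by move=> /dvdpP [q ->] Hi; rewrite coefMXn Hi. Qed.

Lemma gbinomS a j : gbinom a j.+1 = gbinom a j * (a - j%:R) / (j.+1)%:R.
Proof.
rewrite /gbinom big_ord_recr /= factS natrM.
have h1 : 1 + j%:R != 0 :> rat by rewrite addrC natr1 pnatr_eq0.
have h2 : (j`!)%:R != 0 :> rat by rewrite pnatr_eq0 -lt0n fact_gt0.
by field; rewrite h1 h2.
Qed.

Lemma F0 c a : binser_sq_coef c a 0 = 1.
Proof. by rewrite /binser_sq_coef /= /gbinom big_ord0. Qed.

Lemma Fodd c a n : odd n -> binser_sq_coef c a n = 0.
Proof. by rewrite /binser_sq_coef => ->. Qed.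

Lemma Frec c a n : (n.+2)%:R * binser_sq_coef c a n.+2 =
   c * (2 * a - n%:R) * binser_sq_coef c a n.
Proof.
rewrite /binser_sq_coef /=; rewrite negbK.
case: ifP => hn; first by rewrite !mulr0.
have en : n%:R = 2 * (n./2)%:R :> rat.
  by rewrite -natrM mul2n even_halfK // hn.
rewrite -[n.+2]addn2 natrD en gbinomS exprS -[(half n).+1]addn1 natrD.
have h1 : (n./2)%:R + 1 != 0 :> rat.
  by rewrite natr1 pnatr_eq0.
by field; rewrite h1.
Qed.

Definition Lop (c b : rat) (p : {poly rat}) : {poly rat} :=
  (1 + c%:P * 'X^2) * p^`() - b%:P * ('X * p).

Lemma coefL0 c b p : (Lop c b p)`_0 = p`_1.
Proof.
rewrite /Lop mulrDl mul1r coefB coefD -mulrA coefCM coefCM coefXnM coefXM coef_deriv /=.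
by rewrite !mulr0 subr0 addr0.
Qed.

Lemma coefLS c b p i : (Lop c b p)`_i.+1 =
   p`_i.+2 * (i.+2)%:R + (c * i%:R - b) * p`_i.
Proof.
rewrite /Lop mulrDl mul1r coefB coefD -mulrA coefCM coefCM coefXnM coefXM coef_deriv /=.
case: i => [|j] /=.
  ring.
rewrite (_ : (j.+2 - 2 = j)%N) //.
rewrite coef_deriv. ring. by rewrite -addn2 addnK.
Qed.

Lemma Lsq c b p : Lop c (2 * b) (p * p) = (p + p) * Lop c b p.
Proof. rewrite /Lop derivM rmorphM /=. ring. Qed.

Lemma LB c b p q : Lop c b (p - q) = Lop c b p - Lop c b q.
Proof. rewrite /Lop derivB. ring. Qed.

Lemma LE c n : Lop c (n%:R * c * 2) ((1 + c%:P * 'X^2) ^+ n) = 0.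
Proof.
case: n => [|m]; first by rewrite /Lop expr0 derivC !rmorphM /= polyC0; ring.
rewrite /Lop deriv_exp /= derivD derivC derivM derivC derivXn /= expr1.
rewrite !rmorphM /= !rmorph_nat [_ ^+ m.+1]exprS. ring.
Qed.

Lemma LT c a M : (0 < M)%N -> forall i, (i < M)%N ->
  (Lop c (2 * a * c) (\poly_(n < M.+1) binser_sq_coef c a n))`_i = 0.
Proof.
move=> M0 [|j] hj.
  by rewrite coefL0 coef_poly ltnS M0 Fodd.
rewrite coefLS !coef_poly ltnS hj ltnS (ltnW (ltnW hj)).
rewrite mulrC Frec; ring.
Qed.

Lemma Dzero c b (D : {poly rat}) M :
  D`_0 = 0 -> (forall i, (i < M)%N -> (Lop c b D)`_i = 0) ->
  forall i, (i < M)%N -> D`_i = 0 /\ D`_i.+1 = 0.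
Proof.
move=> D0 HL; elim=> [|i IH] hi.
  by split => //; rewrite -(coefL0 c b); apply: HL.
have [h1 h2] := IH (ltnW hi).
split => //.
have := HL _ hi; rewrite coefLS h1 mulr0 addr0 => /eqP.
by rewrite mulf_eq0 pnatr_eq0 orbF => /eqP.
Qed.

Lemma X1sq (p : {poly rat}) : ('X + 1) ^+ 2 * p = p + ('X * p) *+ 2 + 'X^2 * p.
Proof. ring. Qed.

Theorem mainTheorem9 (k : nat) : 'X ^+ (2 * k + 5) %| (Pstar k - Qstar k).
Proof.
set c : rat := (2 * k + 4)%:R.
set a : rat := (2 * k + 1)%:R / 2.
set F := binser_sq_coef c a.
set T : {poly rat} := \poly_(n < (2 * k + 5).+1) F n.
set S : {poly rat} := \poly_(n < 2 * k + 4) F n.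
set E : {poly rat} := 1 + c%:P * 'X^2.
set M := (2 * k + 5)%N.
have hLT := @LT c a M (ltac:(by rewrite /M addnS)).
rewrite -/T in hLT.
have hb : 2 * (2 * a * c) = (2 * k + 1)%:R * c * 2.
  by rewrite /a; field.
set D := T * T - E ^+ (2 * k + 1).
have LD : forall i, (i < M)%N -> (Lop c ((2 * k + 1)%:R * c * 2) D)`_i = 0.
  move=> i hi; rewrite LB LE subr0 -hb Lsq.
  apply: (@coef_dvdXn M) => //.
  by apply: dvdp_mull; apply: dvdXn_coef.
have D0 : D`_0 = 0.
  rewrite -horner_coef0 /D !hornerE horner_coef0 coef_poly /= /F F0.
  by rewrite !mulr0 addr0 expr1n mulr1 subrr.
have hD : 'X^M %| D.
  by apply: dvdXn_coef => i hi; case: (@Dzero c _ D M D0 LD i hi).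
have PE : Pstar k = ('X + 1) ^+ 4 * E ^+ (2 * k + 1).
  by rewrite /Pstar /E /c mul_polyC.
have Fkey : F (2 * k + 2).+2 = - F (2 * k + 2).
  have := Frec c a (2 * k + 2); rewrite -/F.
  have e1 : ((2 * k + 2).+2)%:R = c :> rat.
    by rewrite /c; congr (_%:R); lia.
  have e2 : 2 * a - (2 * k + 2)%:R = -1.
    by rewrite /a !natrD; field.
  rewrite e1 e2 mulrN1 mulNr => h.
  have c0 : c != 0 by rewrite /c pnatr_eq0 addn4.
  by apply: (mulfI c0); rewrite h mulrN.
have hA : 'X^M %| ('X + 1) ^+ 2 * T - Astar k.
  apply: dvdXn_coef => i hi; rewrite coefB /Astar coef_take_poly.
  rewrite /binser_sq_trunc -/c -/a -/F -/S.
  case: (ltnP i (2 * k + 4)) => hi2.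
    rewrite -coefB -mulrBr; apply: (@coef_dvdXn (2 * k + 4)) hi2.
    apply: dvdp_mull; apply: dvdXn_coef => j hj.
    rewrite coefB !coef_poly hj.
    by rewrite (_ : (j < (2 * k + 5).+1)%N = true) ?subrr //; lia.
  have -> : i = (2 * k + 2).+2 by rewrite /M in hi; lia.
  rewrite subr0 X1sq !coefD coefXM coefXnM /=.
  rewrite (_ : ((2 * k + 2).+2 - 2 = 2 * k + 2)%N); last by lia.
  rewrite !coef_poly.
  rewrite (_ : ((2 * k + 2).+2 < (2 * k + 5).+1)%N = true); last by lia.
  rewrite (_ : ((2 * k + 2).+1 < (2 * k + 5).+1)%N = true); last by lia.
  rewrite (_ : ((2 * k + 2) < (2 * k + 5).+1)%N = true); last by lia.
  have F3 : F (2 * k + 2).+1 = 0 by apply: Fodd; rewrite /= oddD oddM.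
  rewrite Fkey F3.
  by rewrite addr0 addrC subrr.
rewrite /Qstar PE.
have -> : ('X + 1) ^+ 4 * E ^+ (2 * k + 1) - Astar k ^+ 2 =
  (('X + 1) ^+ 2 * T - Astar k) * (('X + 1) ^+ 2 * T + Astar k) - ('X + 1) ^+ 4 * D.
  rewrite /D; ring.
by apply: dvdp_sub; [apply: dvdp_mulr | apply: dvdp_mull].
Qed.
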